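(* For every $\tau\in\mathbb{Z}$ and every integer $m\geq1$, \[ (-1)^{m\tau}\sum_{|\nu|=m}\frac{1}{\mathfrak{z}_\nu}\,\frac{\{m\tau\nu\}\,\{\nu\}_a}{\{\nu\}}\ \in\ \mathbb{Z}[q^{\pm\frac12},a^{\pm\frac12}]. \] Equivalently, for $\tau\neq0$, $\{m\}\{m\tau\}\mathcal{Z}_m(q,a)\in\mathbb{Z}[q^{\pm\frac12},a^{\pm\frac12}]$.
   Context: $\{n\}_x=x^{n/2}-x^{-n/2}$, $\{n\}=\{n\}_q$; for a partition $\nu=(\nu_1,\dots,\nu_\ell)$ of $m$: $\{\nu\}_x=\prod_i\{\nu_i\}_x$, $\{\nu\}=\{\nu\}_q$, $\{m\tau\nu\}=\prod_i\{m\tau\nu_i\}$; $\mathfrak{z}_\nu=\prod_j j^{k_j}k_j!$ with $k_j$ the number of parts equal to $j$. For $\tau\neq0$, $\mathcal{Z}_m(q,a)=(-1)^{m\tau}\sum_{|\nu|=m}\frac{1}{\mathfrak{z}_\nu}\frac{\{m\nu\tau\}}{\{m\}\{m\tau\}}\frac{\{\nu\}_a}{\{\nu\}}$, so the displayed sum equals $\{m\}\{m\tau\}\mathcal{Z}_m(q,a)$. *)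

(* Defs.v *)
From HB Require Import structures.
From mathcomp Require Import all_boot all_order all_algebra fraction.
Set Implicit Arguments. Unset Strict Implicit. Unset Printing Implicit Defensive.
Import Order.TTheory GRing.Theory Num.Theory.
Local Open Scope ring_scope.

(* The field Q(q^{1/2}, a^{1/2}) of rational functions in two independent
   indeterminates: fractions of bivariate polynomials {poly {poly rat}}.
   The inner variable stands for q^{1/2}, the outer one for a^{1/2}. *)
Definition RF : fieldType := {fraction {poly {poly rat}}}.

Definition qh : RF := tofrac ((('X : {poly rat})%:P) : {poly {poly rat}}).
Definition ah : RF := tofrac ('X : {poly {poly rat}}).

(* {n}_x = x^{n/2} - x^{-n/2}, written with X = x^{1/2} and n : int *)
Definition qbr (X : RF) (n : int) : RF := X ^ n - X ^ (- n).

(* They are enumerated via their zero-padded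
   length-m versions (functions 'I_m -> 'I_(m+1)), which are exactly the
   nonincreasing sequences of naturals <= m of length m summing to m. *)
Definition is_partition (m : nat) (s : seq nat) : bool :=
  [&& sorted geq s, all (fun x => 0 < x)%N s & sumn s == m].

Definition padded (m : nat) (f : {ffun 'I_m -> 'I_m.+1}) : seq nat :=
  [seq val (f i) | i <- enum 'I_m].

Definition partitions (m : nat) : seq (seq nat) :=
  [seq [seq x <- padded f | (0 < x)%N]
   | f <- enum {ffun 'I_m -> 'I_m.+1}
   & sorted geq (padded f) && (sumn (padded f) == m)].

Definition zee (nu : seq nat) : nat :=
  \prod_(j <- undup nu) (j ^ count_mem j nu * (count_mem j nu)`!)%N.

Definition Zsum (m : nat) (tau : int) : RF :=
  (-1) ^ (m%:Z * tau) *
  \sum_(nu <- partitions m)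
     ((zee nu)%:R^-1 *
      (\prod_(i <- nu) qbr qh (m%:Z * tau * i%:Z)) *
      (\prod_(i <- nu) qbr ah i%:Z) /
      (\prod_(i <- nu) qbr qh i%:Z)).

Definition laurent_int (x : RF) : Prop :=
  exists (P : {poly {poly int}}) (k l : nat),
    x = tofrac (map_poly (map_poly intr) P : {poly {poly rat}})
        / (qh ^+ k * ah ^+ l).

(* Main.v *)
Require Import Defs.
From HB Require Import structures.
From mathcomp Require Import all_boot all_order all_algebra fraction.
From mathcomp Require Import zify ring.
Import Order.TTheory GRing.Theory Num.Theory.
Local Open Scope ring_scope.

Lemma geq_tr : transitive geq.
Proof. by move=> y x z /= h1 h2; apply: leq_trans h2 h1. Qed.
Lemma geq_tot : total geq.
Proof. by move=> x y /=; apply: leq_total. Qed.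
Lemma geq_anti : antisymmetric geq.
Proof. by move=> x y /andP[h1 h2]; apply/eqP; rewrite eqn_leq; apply/andP; split. Qed.

Lemma sumn_filter_pos s : sumn [seq x <- s | (0 < x)%N] = sumn s.
Proof. by elim: s => //= -[|x] s /= ->. Qed.

Lemma sorted_geq_split t : sorted geq t ->
  t = [seq x <- t | (0 < x)%N] ++ nseq (size t - size [seq x <- t | (0 < x)%N]) 0%N.
Proof.
elim: t => //= x t IH Hs.
have Ht := path_sorted Hs.
case: x Hs => [|x] Hs /=.
  have A := order_path_min geq_tr Hs.
  have Et : t = nseq (size t) 0%N.
    apply/all_pred1P; apply/allP => y /(allP A); by rewrite /= leqn0.
  rewrite Et filter_nseq /= size_nseq.
  by [].
congr (_ :: _); rewrite {1}(IH Ht); congr (_ ++ nseq _ _); lia.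
Qed.

Lemma size_padded m f : size (@padded m f) = m.
Proof. by rewrite /padded size_map size_enum_ord. Qed.

Lemma size_le_sumn s : all (fun x => 0 < x)%N s -> (size s <= sumn s)%N.
Proof. elim: s => //= x s IH /andP[x0 /IH]; lia. Qed.

Lemma mem_le_sumn s x : x \in s -> (x <= sumn s)%N.
Proof. elim: s => //= y s IH; rewrite in_cons => /orP[/eqP->|/IH]; lia. Qed.

Lemma mem_partitions m s : (s \in partitions m) = is_partition m s.
Proof.
apply/idP/idP.
  case/mapP => f; rewrite mem_filter => /andP[/andP[Hs /eqP Hsum] _] ->.
  rewrite /is_partition sorted_filter ?filter_all ?sumn_filter_pos ?Hsum ?eqxx //; exact: geq_tr.
case/and3P => Hs Hp /eqP Hsum.
have Hsz : (size s <= m)%N by rewrite -Hsum size_le_sumn.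
pose f := [ffun i : 'I_m => (inord (nth 0%N s i) : 'I_m.+1)].
have Pf : padded f = s ++ nseq (m - size s) 0%N.
  rewrite /padded.
  have -> : [seq val (f i) | i <- enum 'I_m] = [seq nth 0%N s i | i <- iota 0 m].
    rewrite -val_enum_ord -map_comp; apply: eq_map => i /=.
    rewrite ffunE inordK // ltnS.
    case: (ltnP i (size s)) => hi; last by rewrite nth_default.
    by rewrite (leq_trans (@mem_le_sumn _ _ (mem_nth 0%N hi))) ?Hsum.
  apply: (@eq_from_nth _ 0%N); first by rewrite size_map size_iota size_cat size_nseq subnKC.
  move=> i; rewrite size_map size_iota => hi.
  rewrite (nth_map 0%N) ?size_iota // nth_iota // add0n nth_cat.
  case: ltnP => // hs; rewrite nth_nseq if_same nth_default //.
apply/mapP; exists f.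
  rewrite mem_filter mem_enum andbT Pf sumn_cat sumn_nseq mul0n addn0 Hsum eqxx andbT.
  rewrite (sorted_pairwise geq_tr) pairwise_cat -(sorted_pairwise geq_tr) Hs /=.
  apply/andP; split; first by apply/allrelP => x y _ /nseqP[-> _].
  rewrite -(sorted_pairwise geq_tr).
  by elim: (m - size s)%N => //= -[|k] //= ->.
rewrite Pf filter_cat filter_nseq /= cats0.
by symmetry; apply/all_filterP.
Qed.

Lemma uniq_partitions m : uniq (partitions m).
Proof.
rewrite /partitions map_inj_in_uniq; first by rewrite filter_uniq // enum_uniq.
move=> f1 f2.
rewrite !mem_filter => /andP[/andP[s1 _] _] /andP[/andP[s2 _] _] E.
have P1 := @sorted_geq_split _ s1; have P2 := @sorted_geq_split _ s2.
have : padded f1 = padded f2 by rewrite P1 P2 E !size_padded.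
rewrite /padded => /eq_in_map H; apply/ffunP => i; apply/val_inj; exact: H (mem_enum _ i).
Qed.

Lemma natr_neq0 n : (0 < n)%N -> (n%:R : RF) != 0.
Proof.
move=> n0.
have -> : (n%:R : RF) = tofrac (n%:R : {poly {poly rat}}) by rewrite rmorph_nat.
by rewrite tofrac_eq0 -!polyC_natr !polyC_eq0 pnatr_eq0 -lt0n.
Qed.

Definition fz (s : seq nat) (i : nat) : nat := (i ^ count_mem i s * (count_mem i s)`!)%N.

Lemma zee_U s U : uniq U -> {subset s <= U} -> zee s = (\prod_(i <- U) fz s i)%N.
Proof.
move=> uU sU; rewrite /zee [in RHS](bigID (fun i => i \in s)) /=.
rewrite [X in (_ * X)%N]big1 ?muln1; last first.
  by move=> i /negbTE ni; rewrite /fz (count_memPn (negbT ni)).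
rewrite -[in RHS]big_filter /fz; apply: perm_big.
apply: uniq_perm; [exact: undup_uniq | exact: filter_uniq | move=> x].
rewrite mem_undup mem_filter; case xs: (x \in s) => //=; by rewrite sU.
Qed.

Lemma zee_cons j s : zee (j :: s) = (j * (count_mem j s).+1 * zee s)%N.
Proof.
have uU := undup_uniq (j :: s).
rewrite (@zee_U (j :: s) _ uU); last by move=> x; rewrite mem_undup.
rewrite (@zee_U s _ uU); last by move=> x xs; rewrite mem_undup in_cons xs orbT.
have jU : j \in undup (j :: s) by rewrite mem_undup mem_head.
rewrite !(bigD1_seq j) //= mulnA; congr (_ * _)%N.
  by rewrite /fz /= eqxx add1n expnS factS; ring.
by apply: eq_bigr => i /negbTE nij; rewrite /fz /= eq_sym nij add0n.
Qed.

Lemma zee_perm s t : perm_eq s t -> zee s = zee t.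
Proof.
move=> pst; rewrite /zee.
have pu : perm_eq (undup s) (undup t).
  by apply: uniq_perm; rewrite ?undup_uniq // => x; rewrite !mem_undup (perm_mem pst).
rewrite (perm_big _ pu) /=; apply: eq_bigr => i _.
by rewrite (permP pst).
Qed.

Arguments zee_perm {s t}.

Definition w (g : nat -> RF) (nu : seq nat) : RF :=
  (zee nu)%:R^-1 * \prod_(i <- nu) g i.

Definition Sg (g : nat -> RF) (n : nat) : RF := \sum_(nu <- partitions n) w g nu.

Lemma w_perm g s t : perm_eq s t -> w g s = w g t.
Proof. by move=> pst; rewrite /w (zee_perm pst) (perm_big _ pst). Qed.

Arguments w_perm g {s t}.

Lemma w_cons g j s : (0 < j)%N ->
  g j * w g s = w g (j :: s) * (j * (count_mem j s).+1)%:R.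
Proof.
move=> j0; rewrite /w zee_cons big_cons natrM invfM.
have a0 : ((j * (count_mem j s).+1)%:R : RF) != 0 by apply: natr_neq0; rewrite muln_gt0 j0.
rewrite [RHS]mulrC !mulrA mulfV // mul1r; ring.
Qed.

Lemma perm_sortg s : perm_eq (sort geq s) s.
Proof. by rewrite perm_sort. Qed.

Lemma sum_undup_count s : (\sum_(j <- undup s) j * count_mem j s)%N = sumn s.
Proof.
rewrite sumnE -(big_undup_iterop_count addn s xpredT id).
by apply: eq_bigr => i _; rewrite Monoid.iteropE iter_addn_0 mulnC.
Qed.

Lemma bij_j n j : (j \in iota 1 n) ->
  perm_eq [seq nu <- partitions n | j \in nu]
          [seq sort geq (j :: mu) | mu <- partitions (n - j)].
Proof.
rewrite mem_iota => /andP[j1 jn].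
apply: uniq_perm.
- by rewrite filter_uniq // uniq_partitions.
- rewrite map_inj_in_uniq ?uniq_partitions // => mu1 mu2.
  rewrite !mem_partitions /is_partition => /and3P[s1 _ _] /and3P[s2 _ _] E.
  apply: (sorted_eq geq_tr geq_anti) => //.
  rewrite -(perm_cons j) -(perm_sort geq (j :: mu1)) E.
  exact: perm_sortg.
move=> nu; rewrite mem_filter; apply/andP/mapP.
  case=> jnu; rewrite mem_partitions => /and3P[Hs Hp /eqP Hsum].
  exists (rem j nu).
    rewrite mem_partitions; apply/and3P; split.
    + exact: (subseq_sorted geq_tr (rem_subseq j nu) Hs).
    + by apply/allP => x /mem_rem xnu; apply: (allP Hp).
    + by rewrite -Hsum (perm_sumn (perm_to_rem jnu)) /= addKn.
  apply: (sorted_eq geq_tr geq_anti) => //; first exact: sort_sorted geq_tot _.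
  by rewrite perm_sym perm_sort perm_sym perm_to_rem.
case=> mu; rewrite mem_partitions => /and3P[Hs Hp /eqP Hsum] ->.
split; first by rewrite mem_sort mem_head.
rewrite mem_partitions; apply/and3P; split.
+ exact: sort_sorted geq_tot _.
+ by rewrite (perm_all _ (perm_sortg _)) /= Hp andbT.
+ by rewrite (perm_sumn (perm_sortg _)) /= Hsum subnKC.
Qed.

Arguments bij_j {n j}.

Lemma newton g n : g 0%N = 0 ->
  n%:R * Sg g n = \sum_(i < n.+1) g i * Sg g (n - i).
Proof.
move=> g0.
pose H j nu := w g nu * (j * count_mem j nu)%:R.
rewrite -(big_mkord xpredT (fun i => g i * Sg g (n - i))) /index_iota subn0 /=.
rewrite big_cons g0 mul0r add0r.
have -> : \sum_(i <- iota 1 n) g i * Sg g (n - i) =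
          \sum_(j <- iota 1 n) \sum_(nu <- partitions n | j \in nu) H j nu.
  apply: eq_big_seq => j jI.
  rewrite -big_filter (perm_big _ (bij_j jI)) big_map /Sg mulr_sumr.
  apply: eq_bigr => mu _; rewrite /H (w_perm _ (perm_sortg _)).
  rewrite (permP (perm_sortg _)) /= eqxx add1n -w_cons //.
  by move: jI; rewrite mem_iota => /andP[].
rewrite /Sg mulr_sumr.
under [RHS]eq_bigr => j _ do rewrite big_mkcond.
rewrite exchange_big /=; apply: eq_big_seq => nu.
rewrite mem_partitions => /and3P[Hs Hp /eqP Hsum].
rewrite -big_mkcond /=.
have pu : perm_eq (undup nu) [seq j <- iota 1 n | j \in nu].
  apply: uniq_perm; rewrite ?undup_uniq ?filter_uniq ?iota_uniq // => x.
  rewrite mem_undup mem_filter mem_iota; case xnu: (x \in nu) => //=.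
  rewrite (allP Hp x xnu) /= add1n ltnS -Hsum.
  by rewrite (@mem_le_sumn _ _ xnu).
transitivity (\sum_(j <- [seq j <- iota 1 n | j \in nu]) H j nu); last by rewrite big_filter.
rewrite -(perm_big _ pu) /H -mulr_sumr -natr_sum sum_undup_count Hsum.
by rewrite mulrC.
Qed.

Definition low (M : nat) (p : {poly RF}) := forall k, (k < M)%N -> p`_k = 0.

Lemma lowD M p q : low M p -> low M q -> low M (p + q).
Proof. by move=> hp hq k kM; rewrite coefD hp ?hq ?addr0. Qed.
Lemma lowN M p : low M p -> low M (- p).
Proof. by move=> hp k kM; rewrite coefN hp ?oppr0. Qed.
Lemma lowMr M p q : low M p -> low M (p * q).
Proof.
move=> hp k kM; rewrite coefM big1 // => i _; rewrite hp ?mul0r //.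
by apply: leq_ltn_trans kM; rewrite -ltnS.
Qed.
Lemma lowMl M p q : low M q -> low M (p * q).
Proof. by rewrite mulrC; apply: lowMr. Qed.

Definition NP M (G F : {poly RF}) := F`_0 = 1 /\ low M (F^`() * 'X - G * F).

Lemma NP_mul M (G1 G2 F1 F2 : {poly RF}) : NP M G1 F1 -> NP M G2 F2 -> NP M (G1 + G2) (F1 * F2).
Proof.
move=> [h1 l1] [h2 l2]; split; first by rewrite coef0M h1 h2 mulr1.
have -> : (F1 * F2)^`() * 'X - (G1 + G2) * (F1 * F2) =
  (F1^`() * 'X - G1 * F1) * F2 + F1 * (F2^`() * 'X - G2 * F2).
  by rewrite derivM; ring.
by apply: lowD; [apply: lowMr | apply: lowMl].
Qed.

Arguments NP_mul {M G1 G2 F1 F2}.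

Lemma NP_eqG M (G1 G2 F : {poly RF}) : (forall k, (k < M)%N -> G1`_k = G2`_k) -> NP M G1 F -> NP M G2 F.
Proof.
move=> hG [h0 l]; split => //.
have -> : F^`() * 'X - G2 * F = (F^`() * 'X - G1 * F) + (G1 - G2) * F by ring.
apply: lowD => //; apply: lowMr => k kM; by rewrite coefB hG ?subrr.
Qed.

Lemma NP_uniq M (G F1 F2 : {poly RF}) : G`_0 = 0 -> NP M G F1 -> NP M G F2 ->
  forall k, (k < M)%N -> F1`_k = F2`_k.
Proof.
move=> G0 [h1 l1] [h2 l2].
have l : low M ((F1 - F2)^`() * 'X - G * (F1 - F2)).
  have -> : (F1 - F2)^`() * 'X - G * (F1 - F2) =
     (F1^`() * 'X - G * F1) - (F2^`() * 'X - G * F2) by rewrite derivB; ring.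
  by apply: lowD => //; apply: lowN.
elim/ltn_ind => k IH kM; apply/eqP; rewrite -subr_eq0 -coefB; apply/eqP.
case: k IH kM => [|k] IH kM; first by rewrite coefB h1 h2 subrr.
have H := l _ kM.
rewrite coefB coefMX /= coef_deriv coefM big_ord_recl G0 mul0r add0r in H.
rewrite big1 ?subr0 in H; last first.
  move=> i _; rewrite lift0.
  rewrite subSS coefB IH ?subrr ?mulr0 //; lia.
move: H; rewrite -mulr_natr => /eqP; rewrite mulf_eq0 (negbTE (@natr_neq0 _ (ltn0Sn k))) orbF.
by move/eqP.
Qed.

Lemma NP_of_index M (S g : nat -> RF) : (0 < M)%N -> S 0%N = 1 -> g 0%N = 0 ->
  (forall n, (n < M)%N -> n%:R * S n = \sum_(i < n.+1) g i * S (n - i)%N) ->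
  NP M (\poly_(i < M) g i) (\poly_(i < M) S i).
Proof.
move=> M0 S0 g0 hN; split; first by rewrite coef_poly M0.
move=> k kM; rewrite coefB coefMX coefM.
case: k kM => [|k] kM /=.
  by rewrite big_ord_recl big_ord0 !coef_poly M0 g0 mul0r addr0 subrr.
rewrite coef_deriv coef_poly kM -mulr_natl hN //.
apply/eqP; rewrite subr_eq0; apply/eqP; apply: eq_bigr => i _.
rewrite !coef_poly (leq_ltn_trans _ kM) ?(leq_ltn_trans _ kM) ?leq_subr //.
by rewrite -ltnS.
Qed.

Definition Fp (M : nat) (y : RF) : {poly RF} := \poly_(i < M) (y ^+ i).
Definition Gp (M : nat) (y : RF) : {poly RF} := \poly_(i < M) (if i == 0%N then 0 else y ^+ i).
Definition Fn (M : nat) (z : RF) : {poly RF} :=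
  \poly_(i < M) (if i == 0%N then 1 else if i == 1%N then - z else 0).
Definition Gn (M : nat) (z : RF) : {poly RF} := \poly_(i < M) (if i == 0%N then 0 else - z ^+ i).

Lemma NP_pos M y : (0 < M)%N -> NP M (Gp M y) (Fp M y).
Proof.
move=> M0; apply: NP_of_index => // n _.
rewrite big_ord_recl /= mul0r add0r.
rewrite (eq_bigr (fun _ => y ^+ n)); last first.
  by move=> i _; rewrite /bump /= add1n -exprD subnKC.
by rewrite sumr_const card_ord mulr_natl.
Qed.

Lemma NP_neg M z : (0 < M)%N -> NP M (Gn M z) (Fn M z).
Proof.
move=> M0; apply: NP_of_index => // -[|[|n]] _.
- by rewrite big_ord_recl big_ord0 /= !mul0r addr0.
- by rewrite !big_ord_recl big_ord0 /= mul0r add0r addr0 mul1r mulr1 expr1.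
rewrite big_ord_recr big_ord_recr /= big1 ?add0r; last first.
  move=> i _; have hi := ltn_ord i.
  have -> : (n.+2 - i = (n - i).+2)%N by lia.
  by rewrite mulr0.
by rewrite mulr0 subSnn subnn /= mulr1 mulrNN -exprSr addrN.
Qed.

Lemma NP_01 M : NP M 0 1.
Proof.
split; first by rewrite coef1.
by move=> k _; rewrite -polyC1 derivC mul0r mul0r subr0 coef0.
Qed.

Lemma NP_all M (ps ns : seq RF) : (0 < M)%N ->
  NP M (\sum_(y <- ps) Gp M y + \sum_(z <- ns) Gn M z)
       (\prod_(y <- ps) Fp M y * \prod_(z <- ns) Fn M z).
Proof.
move=> M0.
have A : NP M (\sum_(y <- ps) Gp M y) (\prod_(y <- ps) Fp M y).
  apply: (big_rec2 (fun G F => NP M G F)); first exact: NP_01.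
  by move=> y G F _ h; apply: (NP_mul (@NP_pos M y M0) h).
have B : NP M (\sum_(z <- ns) Gn M z) (\prod_(z <- ns) Fn M z).
  apply: (big_rec2 (fun G F => NP M G F)); first exact: NP_01.
  by move=> y G F _ h; apply: (NP_mul (@NP_neg M y M0) h).
exact: (NP_mul A B).
Qed.

Definition psi (P : {poly {poly int}}) : RF := tofrac (map_poly (map_poly intr) P).

Lemma psiD P Q : psi (P + Q) = psi P + psi Q.
Proof. by rewrite /psi !rmorphD. Qed.
Lemma psiM P Q : psi (P * Q) = psi P * psi Q.
Proof. by rewrite /psi !rmorphM. Qed.
Lemma psiN P : psi (- P) = - psi P.
Proof. by rewrite /psi !rmorphN. Qed.
Lemma psi1 : psi 1 = 1.
Proof. by rewrite /psi !rmorph1. Qed.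
Lemma psi0 : psi 0 = 0.
Proof. by rewrite /psi !rmorph0. Qed.

Definition qI : {poly {poly int}} := ('X : {poly int})%:P.
Definition aI : {poly {poly int}} := 'X.
Lemma psi_q : psi qI = qh.
Proof. by rewrite /psi /qI map_polyC /= map_polyX. Qed.
Lemma psi_a : psi aI = ah.
Proof. by rewrite /psi /aI map_polyX. Qed.

Lemma psiX P n : psi (P ^+ n) = psi P ^+ n.
Proof. by elim: n => [|n IH]; rewrite ?expr0 ?psi1 // !exprS psiM IH. Qed.

Definition Dint k l := qI ^+ k * aI ^+ l.
Lemma psiD_int k l : psi (Dint k l) = qh ^+ k * ah ^+ l.
Proof. by rewrite /Dint psiM !psiX psi_q psi_a. Qed.

Lemma qh_neq0 : qh != 0.
Proof. by rewrite /qh tofrac_eq0 polyC_eq0 polyX_eq0. Qed.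
Lemma ah_neq0 : ah != 0.
Proof. by rewrite /ah tofrac_eq0 polyX_eq0. Qed.
Lemma den_neq0 k l : qh ^+ k * ah ^+ l != 0.
Proof. exact: (mulf_neq0 (expf_neq0 _ qh_neq0) (expf_neq0 _ ah_neq0)). Qed.

Notation LI := laurent_int.

Lemma LI_intro P k l x : x = psi P / (qh ^+ k * ah ^+ l) -> LI x.
Proof. by move=> ->; exists P, k, l. Qed.
Lemma LI_elim x : LI x -> exists P k l, x = psi P / (qh ^+ k * ah ^+ l).
Proof. exact: id. Qed.

Lemma frac_add (F : fieldType) (a b d1 d2 : F) : d1 != 0 -> d2 != 0 ->
  a / d1 + b / d2 = (a * d2 + b * d1) / (d1 * d2).
Proof. by move=> h1 h2; field; apply/andP. Qed.

Lemma frac_mul (F : fieldType) (a b d1 d2 : F) :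
  a / d1 * (b / d2) = (a * b) / (d1 * d2).
Proof. by rewrite invfM; ring. Qed.

Lemma LI_add x y : LI x -> LI y -> LI (x + y).
Proof.
move=> /LI_elim [P [k [l ->]]] /LI_elim [Q [k' [l' ->]]].
apply: (@LI_intro (P * Dint k' l' + Q * Dint k l) (k + k')%N (l + l')%N).
rewrite /Dint psiD !psiM !psiX psi_q psi_a !exprD.
have h1 := den_neq0 k l; have h2 := den_neq0 k' l'.
have h3 : qh ^+ k * qh ^+ k' * (ah ^+ l * ah ^+ l') = (qh ^+ k * ah ^+ l) * (qh ^+ k' * ah ^+ l') by ring.
by rewrite (@frac_add _ _ _ _ _ h1 h2) h3.
Qed.

Lemma LI_mul x y : LI x -> LI y -> LI (x * y).
Proof.
move=> /LI_elim [P [k [l ->]]] /LI_elim [Q [k' [l' ->]]].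
apply: (@LI_intro (P * Q) (k + k')%N (l + l')%N).
rewrite !psiM !exprD.
have h3 : qh ^+ k * qh ^+ k' * (ah ^+ l * ah ^+ l') = (qh ^+ k * ah ^+ l) * (qh ^+ k' * ah ^+ l') by ring.
by rewrite h3 frac_mul.
Qed.

Lemma LI_opp x : LI x -> LI (- x).
Proof.
move=> /LI_elim [P [k [l ->]]]; apply: (@LI_intro (- P) k l).
by rewrite psiN mulNr.
Qed.

Lemma LI_0 : LI 0.
Proof. by apply: (@LI_intro 0 0%N 0%N); rewrite psi0 mul0r. Qed.
Lemma LI_1 : LI 1.
Proof. by apply: (@LI_intro 1 0%N 0%N); rewrite psi1 !expr0 mulr1 invr1 mulr1. Qed.
Lemma LI_qh : LI qh.
Proof. by apply: (@LI_intro qI 0%N 0%N); rewrite psi_q !expr0 mulr1 invr1 mulr1. Qed.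
Lemma LI_ah : LI ah.
Proof. by apply: (@LI_intro aI 0%N 0%N); rewrite psi_a !expr0 mulr1 invr1 mulr1. Qed.
Lemma LI_qinv : LI qh^-1.
Proof. by apply: (@LI_intro 1 1%N 0%N); rewrite psi1 expr1 expr0 mulr1 mul1r. Qed.
Lemma LI_ainv : LI ah^-1.
Proof. by apply: (@LI_intro 1 0%N 1%N); rewrite psi1 expr1 expr0 mul1r mul1r. Qed.

Lemma LI_expr x n : LI x -> LI (x ^+ n).
Proof. move=> hx; elim: n => [|n IH]; first by rewrite expr0; exact: LI_1.
by rewrite exprS; apply: LI_mul. Qed.

Lemma LI_exprz x (e : int) : LI x -> LI x^-1 -> LI (x ^ e).
Proof.
move=> hx hi; case: e => n; first exact: LI_expr.
by rewrite NegzE -exprz_inv; apply: LI_expr.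
Qed.



Lemma LI_sum (I : Type) (r : seq I) (P : pred I) (F : I -> RF) :
  (forall i, P i -> LI (F i)) -> LI (\sum_(i <- r | P i) F i).
Proof. move=> h; apply: big_ind => //; [exact: LI_0 | exact: LI_add]. Qed.

Definition polyLI (p : {poly RF}) := forall i, LI p`_i.

Lemma polyLI_mul p q : polyLI p -> polyLI q -> polyLI (p * q).
Proof. move=> hp hq i; rewrite coefM; apply: LI_sum => j _; exact: LI_mul. Qed.

Lemma polyLI_1 : polyLI 1.
Proof. move=> i; rewrite coef1; case: (i == 0%N); [exact: LI_1 | exact: LI_0]. Qed.

Lemma polyLI_prod (r : seq RF) (F : RF -> {poly RF}) :
  (forall y, y \in r -> polyLI (F y)) -> polyLI (\prod_(y <- r) F y).
Proof.
move=> h; rewrite big_seq; apply: big_ind => //; [exact: polyLI_1 | exact: polyLI_mul].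
Qed.

Lemma partitions0 : perm_eq (partitions 0) [:: [::]].
Proof.
apply: uniq_perm => //; first exact: uniq_partitions.
move=> s; rewrite mem_partitions inE /is_partition.
apply/idP/idP; last by move/eqP->.
case/and3P => _ Hp /eqP Hs; apply/eqP.
by case: s Hp Hs => //= x s /andP[x0 _]; lia.
Qed.

Lemma Sg0 g : Sg g 0 = 1.
Proof.
rewrite /Sg (perm_big _ partitions0) big_seq1 /w.
have -> : zee [::] = 1%N by rewrite /zee big_nil.
by rewrite big_nil invr1 mulr1.
Qed.

Lemma Sg_LI g (ps ns : seq RF) m : g 0%N = 0 ->
  (forall k, (0 < k)%N -> g k = \sum_(y <- ps) y ^+ k - \sum_(z <- ns) z ^+ k) ->
  (forall y, y \in ps -> LI y) -> (forall z, z \in ns -> LI z) -> LI (Sg g m).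
Proof.
move=> g0 hg hp hn.
have M0 : (0 < m.+1)%N by [].
have N1 := @NP_of_index m.+1 (Sg g) g M0 (Sg0 g) g0 (fun n _ => @newton g n g0).
have N2 := @NP_all m.+1 ps ns M0.
have N3 : NP m.+1 (\poly_(i < m.+1) g i)
                (\prod_(y <- ps) Fp m.+1 y * \prod_(z <- ns) Fn m.+1 z).
  apply: (@NP_eqG m.+1 _ _ _ _ N2) => k kM.
  rewrite coefD !coef_sum coef_poly kM.
  under eq_bigr => y _ do rewrite coef_poly kM.
  under [X in _ + X = _]eq_bigr => z _ do rewrite coef_poly kM.
  case: k kM => [|k] kM /=.
    by rewrite g0 !big1 ?addr0.
  by rewrite hg // sumrN.
have G0 : (\poly_(i < m.+1) g i)`_0 = 0 by rewrite coef_poly g0.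
have E := @NP_uniq m.+1 _ _ _ G0 N1 N3 m (ltnSn m).
move: E; rewrite coef_poly ltnSn => ->.
apply: polyLI_mul; apply: polyLI_prod => y yin i; rewrite coef_poly.
  case: (i < m.+1)%N; [exact: LI_expr (hp _ yin) | exact: LI_0].
case: (i < m.+1)%N; last exact: LI_0.
case: (i == 0%N); first exact: LI_1.
case: (i == 1%N); last exact: LI_0.
exact: LI_opp (hn _ yin).
Qed.



Definition gZ (N : int) (k : nat) : RF :=
  qbr qh (N * k%:Z) * qbr ah k%:Z / qbr qh k%:Z.
Definition ee (n j : nat) : int := n%:Z - 1 - 2 * j%:Z.
Definition us n := [seq qh ^ ee n j * ah | j <- iota 0 n].
Definition vs n := [seq qh ^ ee n j * ah^-1 | j <- iota 0 n].

Lemma tele (y : RF) n : y != 0 ->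
  y ^ (n%:Z) - y ^ (- n%:Z) = (y - y^-1) * \sum_(j <- iota 0 n) y ^ ee n j.
Proof.
move=> y0; rewrite mulr_sumr.
have E : forall j, (y - y^-1) * y ^ ee n j =
                   y ^ (n%:Z - 2 * j%:Z) - y ^ (n%:Z - 2 * (j.+1)%:Z).
  move=> j; rewrite mulrBl; congr (_ - _).
    rewrite -{1}(expr1z y) -(expfzDr _ _ y0); congr (_ ^ _); rewrite /ee; lia.
  rewrite -exprN1 -(expfzDr _ _ y0); congr (_ ^ _); rewrite /ee; lia.
rewrite (eq_bigr _ (fun j _ => E j)).
pose h := fun j : nat => y ^ (n%:Z - 2 * j%:Z).
have T := @telescope_sumr _ 0 n h (leq0n n).
rewrite /index_iota subn0 in T.
transitivity (- (h n - h 0%N)); last first.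
  by rewrite -T -sumrN; apply: eq_bigr => j _; rewrite opprB.
rewrite opprB /h; congr (_ ^ _ - _ ^ _); lia.
Qed.

Lemma gZ0 N : gZ N 0 = 0.
Proof. by rewrite /gZ /qbr mulr0 oppr0 subrr !mul0r. Qed.

Lemma qbr_neq0 k : (0 < k)%N -> qbr qh k%:Z != 0.
Proof.
move=> k0; rewrite /qbr subr_eq0; apply/negP => /eqP E.
have H : qh ^+ (k + k) = 1.
  rewrite exprD; have -> : qh ^+ k = qh ^ k%:Z by [].
  rewrite {2}E -(expfzDr _ _ qh_neq0) addrN; exact: expr0z.
move: H; rewrite /qh -tofracXn -tofrac1 => /eqP; rewrite tofrac_eq -polyC_exp.
rewrite -polyC1 (inj_eq polyC_inj) => /eqP H.
have := congr1 (fun p : {poly rat} => size p) H.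
rewrite /= size_polyXn size_poly1; lia.
Qed.

Lemma cancel3 (F : fieldType) (a t b : F) : a != 0 -> a * t * b / a = t * b.
Proof. by move=> a0; field. Qed.

Lemma gZ_pos n k : (0 < k)%N ->
  gZ n%:Z k = \sum_(y <- us n) y ^+ k - \sum_(z <- vs n) z ^+ k.
Proof.
move=> k0; pose y := qh ^ k%:Z.
have y0 : y != 0 by rewrite /y; exact: (expf_neq0 _ qh_neq0).
have Hq : qbr qh (n%:Z * k%:Z) = y ^ n%:Z - y ^ (- n%:Z).
  by rewrite /qbr /y !exprz_exp; congr (_ ^ _ - _ ^ _); ring.
have Hk : qbr qh k%:Z = y - y^-1 by rewrite /qbr /y invr_expz.
have nz := @qbr_neq0 k k0.
rewrite /gZ Hq (@tele y n y0) -Hk (@cancel3 _ _ _ _ nz) mulr_suml /us /vs !big_map -sumrB.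
apply: eq_bigr => j _; rewrite /qbr mulrBr !exprMn.
have -> : (qh ^ ee n j) ^+ k = y ^ ee n j.
  by rewrite /y -[(qh ^ ee n j) ^+ k]/((qh ^ ee n j) ^ k%:Z) !exprz_exp mulrC.
by rewrite -[ah ^+ k]/(ah ^ k%:Z) -[(ah^-1) ^+ k]/((ah^-1) ^ k%:Z) exprz_inv.
Qed.

Lemma gZ_neg n k : gZ (- n%:Z) k = - gZ n%:Z k.
Proof. by rewrite /gZ /qbr mulNr opprK -opprB !mulNr. Qed.

Lemma Zsum_eq m tau : Zsum m tau = (-1) ^ (m%:Z * tau) * Sg (gZ (m%:Z * tau)) m.
Proof.
rewrite /Zsum /Sg; congr (_ * _); apply: eq_bigr => nu _.
by rewrite /w /gZ !big_split /= prodfV !mulrA.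
Qed.

Lemma LI_us n y : y \in us n -> LI y.
Proof.
case/mapP => j _ ->; apply: LI_mul; last exact: LI_ah.
exact: LI_exprz LI_qh LI_qinv.
Qed.
Lemma LI_vs n y : y \in vs n -> LI y.
Proof.
case/mapP => j _ ->; apply: LI_mul; last exact: LI_ainv.
exact: LI_exprz LI_qh LI_qinv.
Qed.

Theorem lemma4p18 (tau : int) (m : nat) :
  (1 <= m)%N -> laurent_int (Zsum m tau).
Proof.
move=> _; rewrite Zsum_eq; apply: LI_mul.
  apply: LI_exprz; first exact: LI_opp LI_1.
  rewrite invrN1; exact: LI_opp LI_1.
have [n [-> | ->]] : exists n : nat, m%:Z * tau = n%:Z \/ m%:Z * tau = - n%:Z.
  case: (m%:Z * tau) => n; first by exists n; left.
  by exists n.+1; right; rewrite NegzE.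
  apply: (@Sg_LI _ (us n) (vs n)); first exact: gZ0.
  - exact: gZ_pos.
  - exact: LI_us.
  - exact: LI_vs.
apply: (@Sg_LI _ (vs n) (us n)); first exact: gZ0.
- by move=> k k0; rewrite gZ_neg (@gZ_pos n k k0) opprB.
- exact: LI_vs.
- exact: LI_us.
Qed.
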